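(* Let $s\ge 2$, $n=2s-1$, and let $A_1A_2\dots A_n$ be a polygon whose distinct vertices lie on a circle $\Gamma$, with vertex indices taken modulo $n$. For each $i\in\{1,\dots,n\}$, let $d_i$ be a line through $A_i$ meeting the line of the opposite side $A_{i+s-1}A_{i+s}$ in a single point $M_i\notin\{A_{i+s-1},A_{i+s}\}$, and let $M'_i$ be the second intersection point of $d_i$ with $\Gamma$. Then $$\prod_{i=1}^{n}\frac{|M_iA_{i+s-1}|}{|M_iA_{i+s}|}=\prod_{i=1}^{n}\frac{|M'_iA_{i+s-1}|}{|M'_iA_{i+s}|}.$$
   Context: $|XY|$ denotes the Euclidean distance between points $X$ and $Y$. *)

(* Defs.v *)
From HB Require Import structures.
From mathcomp Require Import all_boot all_order all_algebra.
From mathcomp Require Import reals.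
Set Implicit Arguments. Unset Strict Implicit. Unset Printing Implicit Defensive.
Import Order.TTheory GRing.Theory Num.Theory.
Local Open Scope ring_scope.

Definition pt (R : realType) := (R * R)%type.

Section Geo.
Variable R : realType.

Definition dist (P Q : pt R) : R :=
  Num.sqrt ((P.1 - Q.1) ^+ 2 + (P.2 - Q.2) ^+ 2).

Definition on_circle (c : pt R) (r : R) (P : pt R) : Prop := dist P c = r.

Definition on_line_dir (P v X : pt R) : Prop :=
  exists t : R, X = (P.1 + t * v.1, P.2 + t * v.2).

Definition on_line2 (P Q X : pt R) : Prop := on_line_dir P (Q.1 - P.1, Q.2 - P.2) X.
End Geo.

(* Main.v *)
Require Import Defs.
From HB Require Import structures.
From mathcomp Require Import all_boot all_order all_algebra.
From mathcomp Require Import reals.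
From mathcomp Require Import ring lra zify.
Import Order.TTheory GRing.Theory Num.Theory.
Local Open Scope ring_scope.

Section S.
Variable R : realType.

Definition sq (X Y : pt R) : R := (X.1 - Y.1) ^+ 2 + (X.2 - Y.2) ^+ 2.

Lemma sq_ge0 (X Y : pt R) : 0 <= sq X Y.
Proof. by rewrite /sq addr_ge0 // sqr_ge0. Qed.

Lemma sq_neq0 (X Y : pt R) : X <> Y -> sq X Y != 0.
Proof.
case: X => x1 x2; case: Y => y1 y2 /= hne.
apply/negP; rewrite /sq /= paddr_eq0 ?sqr_ge0 // !sqrf_eq0 !subr_eq0 => /andP[/eqP e1 /eqP e2].
by apply: hne; rewrite e1 e2.
Qed.

Lemma dist_sq (X Y : pt R) : dist X Y = Num.sqrt (sq X Y).
Proof. by []. Qed.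

Lemma dist_neq0 (X Y : pt R) : X <> Y -> dist X Y != 0.
Proof.
move=> h; rewrite dist_sq; apply/negP => /eqP e.
have : 0 < Num.sqrt (sq X Y) by rewrite sqrtr_gt0 lt0r sq_neq0 // sq_ge0.
by rewrite e ltxx.
Qed.

Lemma circE (c : pt R) (r : R) (X : pt R) : 0 < r -> on_circle c r X <-> sq X c = r ^+ 2.
Proof.
move=> hr; rewrite /on_circle dist_sq; split => [<-|e].
  by rewrite sqr_sqrtr // sq_ge0.
by rewrite e sqrtr_sqr ger0_norm // ltW.
Qed.

Lemma core (x1 x2 y1 y2 v1 v2 r u : R) :
  x1^+2 + x2^+2 = r^+2 -> y1^+2 + y2^+2 = r^+2 ->
  u * (v1^+2 + v2^+2) = -2 * (x1 * v1 + x2 * v2) ->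
  ((x1 + u * v1 - y1)^+2 + (x2 + u * v2 - y2)^+2) * ((x1 - y1)^+2 + (x2 - y2)^+2)
    * (v1^+2 + v2^+2)
  = 4 * r^+2 * ((x1 - y1) * v2 - (x2 - y2) * v1)^+2.
Proof.
move=> hx hy hu.
have -> : ((x1 + u * v1 - y1)^+2 + (x2 + u * v2 - y2)^+2) * ((x1 - y1)^+2 + (x2 - y2)^+2)
    * (v1^+2 + v2^+2) =
  (((x1 - y1)^+2 + (x2 - y2)^+2) * (v1^+2 + v2^+2)
   + 2 * (u * (v1^+2 + v2^+2)) * ((x1 - y1) * v1 + (x2 - y2) * v2)
   + (u * (v1^+2 + v2^+2))^+2) * ((x1 - y1)^+2 + (x2 - y2)^+2) by ring.
rewrite hu -hx.
apply/eqP; rewrite -subr_eq0; apply/eqP.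
set L := (_ - _).
have -> : L = ((1%:R)*y2^+2*v1^+2 + (1%:R)*y2^+2*v2^+2 + (-4%:R)*x2*y2*v1^+2 + (4%:R)*x1*y2*v1*v2 + (-1%:R)*x1^+2*v1^+2 + (3%:R)*x1^+2*v2^+2 + (-4%:R)*x1*y1*v2^+2 + (1%:R)*y1^+2*v1^+2 + (1%:R)*y1^+2*v2^+2 + (3%:R)*x2^+2*v1^+2 + (-1%:R)*x2^+2*v2^+2 + (-8%:R)*x1*x2*v1*v2 + (4%:R)*x2*y1*v1*v2) * (y1^+2 + y2^+2 - (x1^+2 + x2^+2)) by rewrite /L; ring.
by rewrite hy hx subrr mulr0.
Qed.

Lemma step (c : pt R) (r : R) (hr : 0 < r) (P a b v M M' : pt R) :
  on_circle c r P -> on_circle c r a -> on_circle c r b -> P <> a -> P <> b ->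
  v <> (0, 0) ->
  on_line_dir P v M -> on_line2 a b M ->
  (forall X, on_line_dir P v X -> on_line2 a b X -> X = M) -> M <> a -> M <> b ->
  on_line_dir P v M' -> on_circle c r M' ->
  (M' <> P \/ forall X, on_line_dir P v X -> on_circle c r X -> X = P) ->
  dist M a / dist M b = (dist P a / dist P b) * (dist M' a / dist M' b).
Proof.
move=> cP ca cb nPa nPb nv lM l2M uM nMa nMb lM' cM' hdisj.
have nMb' : M' <> b.
  move=> e; apply: nMb; apply/esym; apply: uM; first by rewrite -e.
  by exists 1; case: (a) (b) => a1 a2 [b1 b2] /=; congr pair; ring.
have key : sq M a * sq P b * sq M' b = sq M b * sq P a * sq M' a.
  have hPa := sq_neq0 _ _ nPa.
  clear nPa nPb uM nMa nMb nMb'.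
  move: hPa lM l2M lM' cP ca cb cM' hdisj.
  rewrite !circE //.
  case: c => c1 c2; case: P => p1 p2; case: a => a1 a2; case: b => b1 b2.
  case: v nv => v1 v2 nv; case: M => m1 m2; case: M' => n1 n2.
  rewrite /sq /= => hPa [t [-> ->]] [w [e1 e2]] [u [-> ->]] cP ca cb cM' hdisj.
  have hV : v1 ^+ 2 + v2 ^+ 2 != 0.
    apply/negP; rewrite paddr_eq0 ?sqr_ge0 // !sqrf_eq0 => /andP[/eqP h1 /eqP h2].
    by apply: nv; rewrite h1 h2.
  set k := (p1 - c1) * v1 + (p2 - c2) * v2.
  have hu : u * (v1 ^+ 2 + v2 ^+ 2) = -2 * k.
    have : u * (u * (v1 ^+ 2 + v2 ^+ 2) + 2 * k) = 0.
      have -> : u * (u * (v1 ^+ 2 + v2 ^+ 2) + 2 * k) =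
        (p1 + u * v1 - c1) ^+ 2 + (p2 + u * v2 - c2) ^+ 2 - ((p1 - c1) ^+ 2 + (p2 - c2) ^+ 2)
        by rewrite /k; ring.
      by rewrite cM' cP subrr.
    move/eqP; rewrite mulf_eq0 => /orP[/eqP uz|/eqP h]; last first.
      by apply/eqP; rewrite -subr_eq0; apply/eqP; rewrite -h; ring.
    case: hdisj => [|hX]; first by rewrite uz !mul0r !addr0.
    set u0 := -2 * k / (v1 ^+ 2 + v2 ^+ 2).
    have hu0 : u0 * (v1 ^+ 2 + v2 ^+ 2) = -2 * k by rewrite /u0 divfK.
    have hXe : (p1 + u0 * v1, p2 + u0 * v2) = (p1, p2).
      apply: hX; first by exists u0.
      rewrite circE // /sq /=.
      have -> : (p1 + u0 * v1 - c1) ^+ 2 + (p2 + u0 * v2 - c2) ^+ 2 =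
        (p1 - c1) ^+ 2 + (p2 - c2) ^+ 2 + u0 * (u0 * (v1 ^+ 2 + v2 ^+ 2) + 2 * k)
        by rewrite /k; ring.
      rewrite hu0 cP; have -> : -2 * k + 2 * k = 0 by ring.
      by rewrite mulr0 addr0.
    case: hXe => /eqP; rewrite -subr_eq0 addrC addKr => /eqP h1 /eqP.
    rewrite -subr_eq0 addrC addKr => /eqP h2.
    have u00 : u0 = 0.
      move: h1 h2 nv; case: (eqVneq u0 0) => // nu0.
      by move=> /eqP; rewrite mulf_eq0 (negbTE nu0) /= => /eqP -> /eqP;
        rewrite mulf_eq0 (negbTE nu0) /= => /eqP ->.
    by rewrite uz mul0r -hu0 u00 mul0r.
  have hp1 : p1 = a1 + w * (b1 - a1) - t * v1 by rewrite -e1; ring.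
  have hp2 : p2 = a2 + w * (b2 - a2) - t * v2 by rewrite -e2; ring.
  have E2 := core (p1 - c1) (p2 - c2) (a1 - c1) (a2 - c2) v1 v2 r u cP ca hu.
  have E3 := core (p1 - c1) (p2 - c2) (b1 - c1) (b2 - c2) v1 v2 r u cP cb hu.
  have {E2}E2 : ((p1 + u * v1 - a1) ^+ 2 + (p2 + u * v2 - a2) ^+ 2) *
     ((p1 - a1) ^+ 2 + (p2 - a2) ^+ 2) * (v1 ^+ 2 + v2 ^+ 2) =
     4 * r ^+ 2 * ((p1 - a1) * v2 - (p2 - a2) * v1) ^+ 2.
    by match type of E2 with ?L = _ => transitivity L; [ring | rewrite E2; ring] end.
  have E3' : ((p1 + u * v1 - b1) ^+ 2 + (p2 + u * v2 - b2) ^+ 2) *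
     ((p1 - b1) ^+ 2 + (p2 - b2) ^+ 2) * (v1 ^+ 2 + v2 ^+ 2) =
     4 * r ^+ 2 * ((p1 - b1) * v2 - (p2 - b2) * v1) ^+ 2.
    by match type of E3 with ?L = _ => transitivity L; [ring | rewrite E3; ring] end.
  clear E3; rename E3' into E3.
  have E1 : ((p1 + t * v1 - a1) ^+ 2 + (p2 + t * v2 - a2) ^+ 2) *
      ((p1 - b1) * v2 - (p2 - b2) * v1) ^+ 2 =
      ((p1 + t * v1 - b1) ^+ 2 + (p2 + t * v2 - b2) ^+ 2) *
      ((p1 - a1) * v2 - (p2 - a2) * v1) ^+ 2.
    by rewrite hp1 hp2; ring.
  move: hPa E1 E2 E3.
  set Ma := (p1 + t * v1 - a1) ^+ 2 + (p2 + t * v2 - a2) ^+ 2.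
  set Mb := (p1 + t * v1 - b1) ^+ 2 + (p2 + t * v2 - b2) ^+ 2.
  set Na := (p1 + u * v1 - a1) ^+ 2 + (p2 + u * v2 - a2) ^+ 2.
  set Nb := (p1 + u * v1 - b1) ^+ 2 + (p2 + u * v2 - b2) ^+ 2.
  set Pa := (p1 - a1) ^+ 2 + (p2 - a2) ^+ 2.
  set Pb := (p1 - b1) ^+ 2 + (p2 - b2) ^+ 2.
  set Ca := (p1 - a1) * v2 - (p2 - a2) * v1.
  set Cb := (p1 - b1) * v2 - (p2 - b2) * v1.
  move: Ma Mb Na Nb Pa Pb Ca Cb => Ma Mb Na Nb Pa Pb Ca Cb.
  move=> hPa E1 E2 E3.
  apply: (mulIf (mulf_neq0 hPa hV)) => /=.
  transitivity (Pa * (Ma * (Nb * Pb * (v1 ^+ 2 + v2 ^+ 2)))); first by ring.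
  rewrite E3.
  transitivity (Pa * 4 * r ^+ 2 * (Ma * Cb ^+ 2)); first by ring.
  rewrite E1.
  transitivity (Pa * Mb * (4 * r ^+ 2 * Ca ^+ 2)); first by ring.
  rewrite -E2; ring.
rewrite mulf_div; apply/eqP; rewrite eqr_div; last first.
- by rewrite mulf_neq0 // dist_neq0.
- by rewrite dist_neq0.
rewrite !dist_sq -!sqrtrM ?sq_ge0 ?mulr_ge0 ?sq_ge0 //.
by apply/eqP; congr Num.sqrt; rewrite mulrA key; ring.
Qed.


Lemma dist_sym (X Y : pt R) : dist X Y = dist Y X.
Proof. by rewrite /dist; congr Num.sqrt; ring. Qed.

End S.

Lemma rot1 (R : comPzRingType) (n : nat) (G : nat -> R) : G n = G 0%N ->
  \prod_(i < n) G i.+1 = \prod_(i < n) G i.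
Proof.
case: n => [|n] h; first by rewrite !big_ord0.
by rewrite big_ord_recr big_ord_recl /= h mulrC.
Qed.

Lemma rot (R : comPzRingType) (n : nat) (F : nat -> R) :
  (forall k, F (k + n)%N = F k) -> forall m,
  \prod_(i < n) F (i + m)%N = \prod_(i < n) F i.
Proof.
move=> hF; elim=> [|m IH]; first by apply: eq_bigr => i _; rewrite addn0.
rewrite -IH -(@rot1 _ n (fun j => F (j + m)%N)); last by rewrite add0n addnC hF.
by apply: eq_bigr => i _; rewrite addSn addnS.
Qed.

Theorem mainTheorem5 (R : realType) (s : nat) (hs : (2 <= s)%N)
  (c : pt R) (r : R) (hr : 0 < r)
  (A : nat -> pt R) (v M M' : nat -> pt R) :
  let n := (2 * s - 1)%N in
  (forall k, A (k + n)%N = A k) ->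
  (forall i j, (i < n)%N -> (j < n)%N -> A i = A j -> i = j) ->
  (forall i, (i < n)%N -> on_circle c r (A i)) ->
  (forall i, (i < n)%N ->
     v i <> (0, 0) /\
     [/\
         (* M_i is the single intersection point of d_i with line A_{i+s-1}A_{i+s} *)
         on_line_dir (A i) (v i) (M i),
         on_line2 (A (i + s - 1)%N) (A (i + s)%N) (M i),
         (forall X, on_line_dir (A i) (v i) X ->
                    on_line2 (A (i + s - 1)%N) (A (i + s)%N) X -> X = M i),
         M i <> A (i + s - 1)%N & M i <> A (i + s)%N]) ->
  (forall i, (i < n)%N ->
     [/\ on_line_dir (A i) (v i) (M' i), on_circle c r (M' i) &
         (* second intersection: different from A_i, unless d_i is tangent *)
         (M' i <> A i \/
          forall X, on_line_dir (A i) (v i) X -> on_circle c r X -> X = A i)]) ->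
  \prod_(i < n) (dist (M i) (A (i + s - 1)%N) / dist (M i) (A (i + s)%N)) =
  \prod_(i < n) (dist (M' i) (A (i + s - 1)%N) / dist (M' i) (A (i + s)%N)).
Proof.
move=> n Aper Ainj Acirc HM HM'.
have hn : n = (2 * s - 1)%N by [].
clearbody n.
have Ared : forall k, (k < 2 * n)%N -> A k = A (if (k < n)%N then k else k - n)%N.
  move=> k hk; case: (ltnP k n) => // hkn.
  by rewrite -{1}(subnK hkn) Aper.
have redlt : forall k, (k < 2 * n)%N -> ((if (k < n)%N then k else k - n) < n)%N.
  by move=> k hk; case: (ltnP k n) => hkn; lia.
have Acirc' : forall k, (k < 2 * n)%N -> on_circle c r (A k).
  by move=> k hk; rewrite Ared //; apply: Acirc; apply: redlt.
have dne : forall i k, (i < n)%N -> (k < 2 * n)%N ->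
    (if (k < n)%N then k else k - n)%N <> i -> A i <> A k.
  move=> i k hi hk hne e; apply: hne; apply/esym; apply: Ainj => //.
    exact: redlt.
  by rewrite -Ared.
have dne1 : forall i, (i < n)%N -> A i <> A (i + s - 1)%N.
  move=> i hi; apply: dne => //; first lia.
  by case: (ltnP (i + s - 1) n) => h; lia.
have dne2 : forall i, (i < n)%N -> A i <> A (i + s)%N.
  move=> i hi; apply: dne => //; first lia.
  by case: (ltnP (i + s) n) => h; lia.
rewrite (eq_bigr (fun i : 'I_n => (dist (A i) (A (i + s - 1)%N) / dist (A i) (A (i + s)%N))
   * (dist (M' i) (A (i + s - 1)%N) / dist (M' i) (A (i + s)%N)))); last first.
  move=> i _.
  have hi := ltn_ord i.
  have [nv [lM l2M uM nMa nMb]] := HM i hi.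
  have [lM' cM' hd] := HM' i hi.
  apply: (@step R c r hr (A i) (A (i + s - 1)%N) (A (i + s)%N) (v i) (M i) (M' i)) => //.
  - by apply: Acirc.
  - by apply: Acirc'; lia.
  - by apply: Acirc'; lia.
  - exact: dne1.
  - exact: dne2.
rewrite big_split /= prodf_div.
have -> : \prod_(i < n) dist (A i) (A (i + s)%N) = \prod_(i < n) dist (A i) (A (i + s - 1)%N).
  rewrite -(@rot _ n (fun k => dist (A k) (A (k + s - 1)%N)) _ s); last first.
    move=> k; rewrite Aper.
    have -> : (k + n + s - 1 = (k + s - 1) + n)%N by lia.
    by rewrite Aper.
  apply: eq_bigr => i _.
  have -> : (i + s + s - 1 = i + n)%N by lia.
  by rewrite Aper dist_sym.
rewrite divff ?mul1r //.
apply/prodf_neq0 => i _; apply: dist_neq0; apply: dne1; exact: ltn_ord.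
Qed.
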